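(* Let $\mathcal X,\mathcal Y,\mathcal R$ be sets of binary strings, $r\in\mathbb N$, $F$ a random variable taking values in functions $\mathcal X\to\mathcal Y$, $\mathcal Z\subseteq\mathcal Y^r$, $Z$ a distribution on $\mathcal Z$, $g:\mathcal Z\to\mathcal R$ injective, and $\underline v\in\mathcal X^r$ with pairwise distinct entries. Let $U_B,U_C$ be unitaries, $|\psi\rangle$ a state on $B\otimes C$, $q_B,q_C\in\mathbb N$, and let $\{\Pi_B^w\}_{w\in\mathcal R}$ and $\{\Pi_C^w\}_{w\in\mathcal R}$ be families of pairwise orthogonal projectors on $B$ and $C$ respectively, with $\Pi^w=\Pi_B^w\otimes\Pi_C^w$. Then there is a polynomial $p$ (independent of all other data) such that $$\mathbb E_F\,\mathbb E_{\underline z\leftarrow Z}\Big\|\Pi^{g(\underline z)}\Big((U_BO_B^{F_{\underline v,\underline z}})^{q_B}\otimes(U_CO_C^{F_{\underline v,\underline z}})^{q_C}\Big)|\psi\rangle\Big\|^2\le 9p_{\max}+p(q_B,q_C)\sqrt M,$$ where $p_{\max}=\max_{w\in\mathcal R}\Pr_{\underline z\leftarrow Z}[g(\underline z)=w]$ and $$M=\mathbb E_k\,\mathbb E_l\,\mathbb E_F\,\mathbb E_{\underline z\leftarrow Z}\Big\|(P_{\underline v}\otimes P_{\underline v})\Big((U_BO_B^{F_{\underline v,\underline z}})^{k}\otimes(U_CO_C^{F_{\underline v,\underline z}})^{l}\Big)|\psi\rangle\Big\|^2,$$ with $k$ uniform in $\{0,\dots,q_B-1\}$, $l$ uniform in 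$\{0,\dots,q_C-1\}$.
   Context: For $\underline v\in\mathcal X^r$ with distinct entries and $\underline z\in\mathcal Y^r$, $F_{\underline v,\underline z}$ is the function equal to $F$ except that $F_{\underline v,\underline z}(\underline v_i)=\underline z_i$ for each $i$. For a function $F'$, $O_B^{F'}$ is the oracle unitary $|x\rangle|y\rangle\mapsto|x\rangle|y\oplus F'(x)\rangle$ acting on a query input register (over $\mathcal X$) and output register (over $\mathcal Y$) contained in system $B$ (identity elsewhere); $O_C^{F'}$ likewise on $C$. $P_{\underline v}=\sum_{i=1}^r|\underline v_i\rangle\langle\underline v_i|$ acts on the query input register of the respective system (identity on the rest). *)

(* Defs.v *)
From HB Require Import structures.
From mathcomp Require Import all_boot all_order all_algebra all_field.
From mathcomp Require Export mpoly.
Set Implicit Arguments. Unset Strict Implicit. Unset Printing Implicit Defensive.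
Import Order.TTheory GRing.Theory Num.Theory.
Local Open Scope ring_scope.

Definition vec (T : finType) := T -> algC.
Definition op (T : finType) := T -> T -> algC.

Section Ops.
Variable T : finType.
Definition apply (A : op T) (v : vec T) : vec T := fun i => \sum_j A i j * v j.
Definition mulop (A B : op T) : op T := fun i k => \sum_j A i j * B j k.
Definition idop : op T := fun i j => (i == j)%:R.
Definition zeroop : op T := fun _ _ => 0.
Definition adj (A : op T) : op T := fun i j => (A j i)^*.
Definition opexp (A : op T) (n : nat) : op T := iter n (mulop A) idop.
Definition norm2 (v : vec T) : algC := \sum_i `|v i| ^+ 2.
Definition unitary (A : op T) : Prop :=
  mulop (adj A) A = idop /\ mulop A (adj A) = idop.
Definition projector (P : op T) : Prop := mulop P P = P /\ adj P = P.
Definition orth_proj_family (I : eqType) (Pi : I -> op T) : Prop :=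
  (forall w, projector (Pi w)) /\
  (forall w w', w != w' -> mulop (Pi w) (Pi w') = zeroop).
End Ops.

Definition tensor (T1 T2 : finType) (A : op T1) (B : op T2) : op (T1 * T2)%type :=
  fun i j => A i.1 j.1 * B i.2 j.2.

Definition bits (m : nat) := {ffun 'I_m -> bool}.
Definition bxor m (a b : bits m) : bits m := [ffun k => addb (a k) (b k)].

(* A system containing a query input register (basis X), a query output
   register (basis bits m) and a workspace (basis W). *)
Definition sys (X : finType) (m : nat) (W : finType) : finType :=
  ((X * bits m) * W)%type.

(* Oracle unitary |x>|y>|w> |-> |x>|y xor F'(x)>|w> *)
Definition oracle (X : finType) (m : nat) (W : finType) (F' : X -> bits m)
  : op (sys X m W) :=
  fun i j => (i == ((j.1.1, bxor j.1.2 (F' j.1.1)), j.2))%:R.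

(* P_v = sum_i |v_i><v_i| on the query input register, identity elsewhere *)
Definition Pv (X : finType) (m : nat) (W : finType) (r : nat) (v : r.-tuple X)
  : op (sys X m W) :=
  fun i j => ((i == j) && (i.1.1 \in v))%:R.

(* reprogrammed function F_{v,z}: F_{v,z}(v_i) = z_i, F elsewhere *)
Definition reprog (X : finType) (Y : Type) (r : nat) (F : X -> Y)
  (v : r.-tuple X) (z : r.-tuple Y) : X -> Y :=
  fun x => if x \in v then nth (F x) z (index x v) else F x.

Definition distr (T : finType) (mu : T -> algC) : Prop :=
  (forall t, 0 <= mu t) /\ \sum_t mu t = 1.

Definition expect (T : finType) (mu : T -> algC) (h : T -> algC) : algC :=
  \sum_t mu t * h t.

Arguments oracle {X m} W F' _ _.
Arguments Pv {X m} W {r} v _ _.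

(* Main.v *)
Require Import Defs.
From HB Require Import structures.
From mathcomp Require Import all_boot all_order all_algebra all_field.
From mathcomp Require Import mpoly.
From mathcomp Require Import ring zify.
From Stdlib Require Import FunctionalExtensionality.
Import Order.TTheory GRing.Theory Num.Theory.
Local Open Scope ring_scope.
Set Implicit Arguments. Unset Strict Implicit. Unset Printing Implicit Defensive.

Section Lin.
Variable T : finType.
Implicit Types (A B P : op T) (v w : vec T).

Definition vadd v w : vec T := fun i => v i + w i.
Definition vsub v w : vec T := fun i => v i - w i.
Definition opadd A B : op T := fun i j => A i j + B i j.
Definition opsum n (f : nat -> op T) : op T := fun i j => \sum_(k < n) f k i j.
Definition ip v w : algC := \sum_i (v i)^* * w i.
Definition contr A := forall v, norm2 (apply A v) <= norm2 v.
Definition isom A := forall v, norm2 (apply A v) = norm2 v.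

Lemma sum_delta (F : T -> algC) a : \sum_j ((j == a)%:R * F j) = F a.
Proof.
rewrite (bigD1 a) //= eqxx mul1r big1 ?addr0 // => j /negbTE ->; by rewrite mul0r.
Qed.
Lemma sum_delta' (F : T -> algC) a : \sum_j ((a == j)%:R * F j) = F a.
Proof. under eq_bigr => j _ do rewrite eq_sym. exact: sum_delta. Qed.

Lemma apply_mulop A B v : apply (mulop A B) v = apply A (apply B v).
Proof.
apply: functional_extensionality => i; rewrite /apply /mulop.
under eq_bigr => j _ do rewrite mulr_suml.
rewrite exchange_big /=; apply: eq_bigr => k _; rewrite mulr_sumr.
by apply: eq_bigr => j _; rewrite mulrA.
Qed.

Lemma apply_id v : apply (@idop T) v = v.
Proof. apply: functional_extensionality => i; exact: sum_delta'. Qed.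

Lemma apply_opadd A B v : apply (opadd A B) v = vadd (apply A v) (apply B v).
Proof.
apply: functional_extensionality => i; rewrite /apply /opadd /vadd -big_split.
by apply: eq_bigr => j _; rewrite mulrDl.
Qed.

Lemma apply_opsum n f v :
  apply (opsum n f) v = fun i => \sum_(k < n) apply (f k) v i.
Proof.
apply: functional_extensionality => i; rewrite /apply /opsum exchange_big.
by apply: eq_bigr => j _; rewrite mulr_suml.
Qed.

Lemma apply_vadd A v w : apply A (vadd v w) = vadd (apply A v) (apply A w).
Proof.
apply: functional_extensionality => i; rewrite /apply /vadd -big_split.
by apply: eq_bigr => j _; rewrite mulrDr.
Qed.

Lemma apply_vsub A v w : apply A (vsub v w) = vsub (apply A v) (apply A w).
Proof.
apply: functional_extensionality => i; rewrite /apply /vsub -sumrB.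
by apply: eq_bigr => j _; rewrite mulrBr.
Qed.

Lemma apply_vsum A n (f : nat -> vec T) :
  apply A (fun i => \sum_(k < n) f k i) = fun i => \sum_(k < n) apply A (f k) i.
Proof.
apply: functional_extensionality => i; rewrite /apply exchange_big.
by apply: eq_bigr => j _; rewrite mulr_sumr.
Qed.

Lemma norm2_ip v : norm2 v = ip v v.
Proof. by apply: eq_bigr => i _; rewrite normCK mulrC. Qed.

Lemma norm2_ge0 v : 0 <= norm2 v.
Proof. by apply: sumr_ge0 => i _; rewrite exprn_ge0. Qed.

Lemma ip_adj A v w : ip (apply A v) w = ip v (apply (adj A) w).
Proof.
rewrite /ip /apply /adj.
under eq_bigr => i _ do rewrite rmorph_sum mulr_suml.
rewrite exchange_big /=; apply: eq_bigr => j _; rewrite mulr_sumr.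
by apply: eq_bigr => i _; rewrite rmorphM; ring.
Qed.

Lemma ip_subl u v w : ip (vsub u v) w = ip u w - ip v w.
Proof. rewrite /ip -sumrB; apply: eq_bigr => i _; by rewrite rmorphB mulrBl. Qed.
Lemma ip_subr u v w : ip u (vsub v w) = ip u v - ip u w.
Proof. rewrite /ip -sumrB; apply: eq_bigr => i _; by rewrite mulrBr. Qed.

Lemma isom_unitary A : unitary A -> isom A.
Proof.
move=> [h1 _] v; rewrite !norm2_ip ip_adj -apply_mulop h1 apply_id //.
Qed.

Lemma isom_contr A : isom A -> contr A.
Proof. by move=> h v; rewrite h. Qed.

Lemma contr_mulop A B : contr A -> contr B -> contr (mulop A B).
Proof. by move=> hA hB v; rewrite apply_mulop (le_trans (hA _) (hB _)). Qed.

Lemma isom_mulop A B : isom A -> isom B -> isom (mulop A B).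
Proof. by move=> hA hB v; rewrite apply_mulop hA hB. Qed.

Lemma isom_id : isom (@idop T).
Proof. by move=> v; rewrite apply_id. Qed.

Lemma opexpS A n : opexp A n.+1 = mulop A (opexp A n).
Proof. by []. Qed.

Lemma isom_opexp A n : isom A -> isom (opexp A n).
Proof. move=> h; elim: n => [|n IH]; [exact: isom_id| exact: isom_mulop]. Qed.

Lemma contr_opexp A n : contr A -> contr (opexp A n).
Proof. move=> h; elim: n => [|n IH]; [exact: isom_contr isom_id| exact: contr_mulop]. Qed.

Lemma proj_norm2 P v : projector P -> norm2 (apply P v) = ip v (apply P v).
Proof.
move=> [h1 h2]; rewrite norm2_ip ip_adj h2 -apply_mulop h1 //.
Qed.

Lemma proj_contr P : projector P -> contr P.
Proof.
move=> hP v; have := norm2_ge0 (vsub v (apply P v)).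
rewrite norm2_ip ip_subl !ip_subr -(proj_norm2 _ hP) ip_adj.
case: (hP) => _ ->; rewrite -(proj_norm2 _ hP) -norm2_ip.
by rewrite -norm2_ip subrr subr0 subr_ge0.
Qed.


Definition dg (p : pred T) : op T := fun i j => ((i == j) && p i)%:R.

Lemma apply_dg p v : apply (dg p) v = fun i => (p i)%:R * v i.
Proof.
apply: functional_extensionality => i; rewrite /apply /dg.
rewrite (bigD1 i) //= eqxx big1 ?addr0 // => j /negbTE.
by rewrite eq_sym => ->; rewrite mul0r.
Qed.

Lemma contr_dg p : contr (dg p).
Proof.
move=> v; rewrite apply_dg /norm2; apply: ler_sum => i _.
by case: (p i); rewrite ?mul1r ?mul0r ?normr0 ?expr0n //= exprn_ge0.
Qed.

Lemma dg_compl p v : vadd (apply (dg p) v) (apply (dg (predC p)) v) = v.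
Proof.
rewrite !apply_dg /vadd; apply: functional_extensionality => i /=.
by case: (p i); rewrite ?mul1r ?mul0r ?addr0 ?add0r.
Qed.

Lemma ip_sum (R : finType) x (f : R -> vec T) :
  ip x (fun i => \sum_w f w i) = \sum_w ip x (f w).
Proof.
rewrite /ip exchange_big; apply: eq_bigr => i _; by rewrite mulr_sumr.
Qed.

Lemma orth_sum (R : finType) (Pi : R -> op T) x :
  orth_proj_family Pi -> \sum_w norm2 (apply (Pi w) x) <= norm2 x.
Proof.
move=> [hp ho].
pose Q : op T := fun i j => \sum_w Pi w i j.
have aQ : apply Q x = fun i => \sum_w apply (Pi w) x i.
  apply: functional_extensionality => i; rewrite /apply /Q exchange_big.
  by apply: eq_bigr => j _; rewrite mulr_suml.
have pQ : projector Q.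
  split.
    apply: functional_extensionality => i; apply: functional_extensionality => k.
    rewrite /mulop /Q.
    transitivity (\sum_w \sum_w' mulop (Pi w) (Pi w') i k).
      rewrite /mulop.
      under eq_bigr => j _ do rewrite mulr_suml.
      rewrite exchange_big /=; apply: eq_bigr => w _.
      under eq_bigr => j _ do rewrite mulr_sumr.
      by rewrite exchange_big.
    apply: eq_bigr => w _; rewrite (bigD1 w) //= big1 ?addr0.
      by case: (hp w) => -> _.
    by move=> w' hw'; rewrite ho // eq_sym.
  apply: functional_extensionality => i; apply: functional_extensionality => j.
  rewrite /adj /Q rmorph_sum; apply: eq_bigr => w _.
  by case: (hp w) => _ h; rewrite -[in RHS]h.
have := proj_contr pQ x; rewrite proj_norm2 // aQ ip_sum.
apply: le_trans; rewrite le_eqVlt; apply/orP; left; apply/eqP.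
by apply: eq_bigr => w _; rewrite proj_norm2.
Qed.

End Lin.

Lemma oracle_isom (X : finType) (m : nat) (W : finType) (F' : X -> bits m) :
  isom (oracle W F').
Proof.
apply: isom_unitary.
pose s (j : sys X m W) : sys X m W := ((j.1.1, bxor j.1.2 (F' j.1.1)), j.2).
have ss : forall j, s (s j) = j.
  case=> [[x y] w]; rewrite /s /=; congr (_, _, _).
  by apply/ffunP => k; rewrite !ffunE addbK.
have es : forall i j, (i == s j) = (j == s i).
  by move=> i j; apply/eqP/eqP => ->; rewrite ss.
have oE : forall i j, oracle W F' i j = (i == s j)%:R by [].
split; apply: functional_extensionality => i; apply: functional_extensionality => k;
  rewrite /mulop /adj /idop.
  under eq_bigr => j _ do rewrite !oE conjC_nat mulrC.
  by rewrite sum_delta es ss.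
under eq_bigr => j _ do rewrite !oE conjC_nat (es i) (es k).
by rewrite sum_delta es ss eq_sym.
Qed.

Section Tens.
Variables T1 T2 : finType.
Implicit Types (A B C D : op T1) (y : vec (T1 * T2)%type).

Lemma sum_pair (F : (T1 * T2)%type -> algC) :
  \sum_p F p = \sum_i1 \sum_i2 F (i1, i2).
Proof. by rewrite pair_bigA; apply: eq_bigr => -[]. Qed.

Lemma mulop_idl (T : finType) (A : op T) : mulop (@idop T) A = A.
Proof.
apply: functional_extensionality => i; apply: functional_extensionality => k.
exact: sum_delta'.
Qed.
Lemma mulop_idr (T : finType) (A : op T) : mulop A (@idop T) = A.
Proof.
apply: functional_extensionality => i; apply: functional_extensionality => k.
rewrite /mulop /idop; under eq_bigr => j _ do rewrite mulrC.
exact: sum_delta.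
Qed.

Lemma tensor_mul (A C : op T1) (B D : op T2) :
  mulop (tensor A B) (tensor C D) = tensor (mulop A C) (mulop B D).
Proof.
apply: functional_extensionality => i; apply: functional_extensionality => k.
rewrite /mulop /tensor sum_pair big_distrlr /=; apply: eq_bigr => j1 _.
by apply: eq_bigr => j2 _; ring.
Qed.

Lemma tensor_split (A : op T1) (B : op T2) :
  tensor A B = mulop (tensor A (@idop T2)) (tensor (@idop T1) B).
Proof. by rewrite tensor_mul mulop_idl mulop_idr. Qed.
Lemma tensor_split' (A : op T1) (B : op T2) :
  tensor A B = mulop (tensor (@idop T1) B) (tensor A (@idop T2)).
Proof. by rewrite tensor_mul mulop_idl mulop_idr. Qed.

Lemma norm2_pair y : norm2 y = \sum_i2 norm2 (fun i1 => y (i1, i2)).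
Proof. by rewrite /norm2 sum_pair exchange_big. Qed.
Lemma norm2_pair' y : norm2 y = \sum_i1 norm2 (fun i2 => y (i1, i2)).
Proof. by rewrite /norm2 sum_pair. Qed.

Lemma apply_tl (A : op T1) y i1 i2 :
  apply (tensor A (@idop T2)) y (i1, i2) = apply A (fun j1 => y (j1, i2)) i1.
Proof.
rewrite /apply /tensor sum_pair; apply: eq_bigr => j1 _ /=.
rewrite /idop; under eq_bigr => j2 _ do rewrite -mulrA.
by rewrite -mulr_sumr sum_delta'.
Qed.
Lemma apply_tr (B : op T2) y i1 i2 :
  apply (tensor (@idop T1) B) y (i1, i2) = apply B (fun j2 => y (i1, j2)) i2.
Proof.
rewrite /apply /tensor sum_pair /= exchange_big /=; apply: eq_bigr => j2 _ /=.
rewrite /idop; under eq_bigr => j1 _ do rewrite [_ * B _ _]mulrC -mulrA.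
by rewrite -mulr_sumr sum_delta'.
Qed.

Lemma norm2_tl (A : op T1) y : norm2 (apply (tensor A (@idop T2)) y) =
  \sum_i2 norm2 (apply A (fun i1 => y (i1, i2))).
Proof.
rewrite norm2_pair; apply: eq_bigr => i2 _; apply: eq_bigr => i1 _.
by rewrite apply_tl.
Qed.
Lemma norm2_tr (B : op T2) y : norm2 (apply (tensor (@idop T1) B) y) =
  \sum_i1 norm2 (apply B (fun i2 => y (i1, i2))).
Proof.
rewrite norm2_pair'; apply: eq_bigr => i1 _; apply: eq_bigr => i2 _.
by rewrite apply_tr.
Qed.

Lemma contr_tl (A : op T1) : contr A -> contr (tensor A (@idop T2)).
Proof. move=> h y; rewrite norm2_tl norm2_pair; apply: ler_sum => i _; exact: h. Qed.
Lemma contr_tr (B : op T2) : contr B -> contr (tensor (@idop T1) B).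
Proof. move=> h y; rewrite norm2_tr norm2_pair'; apply: ler_sum => i _; exact: h. Qed.
Lemma isom_tl (A : op T1) : isom A -> isom (tensor A (@idop T2)).
Proof. move=> h y; rewrite norm2_tl norm2_pair; apply: eq_bigr => i _; exact: h. Qed.
Lemma isom_tr (B : op T2) : isom B -> isom (tensor (@idop T1) B).
Proof. move=> h y; rewrite norm2_tr norm2_pair'; apply: eq_bigr => i _; exact: h. Qed.
Lemma contr_tensor (A : op T1) (B : op T2) : contr A -> contr B -> contr (tensor A B).
Proof. by move=> hA hB; rewrite tensor_split; apply: contr_mulop; [apply: contr_tl|apply: contr_tr]. Qed.

Lemma tensor_addl (A C : op T1) (B : op T2) :
  tensor (opadd A C) B = opadd (tensor A B) (tensor C B).
Proof.
apply: functional_extensionality => i; apply: functional_extensionality => k.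
by rewrite /tensor /opadd mulrDl.
Qed.
Lemma tensor_addr (A : op T1) (B D : op T2) :
  tensor A (opadd B D) = opadd (tensor A B) (tensor A D).
Proof.
apply: functional_extensionality => i; apply: functional_extensionality => k.
by rewrite /tensor /opadd mulrDr.
Qed.
Lemma tensor_suml n (f : nat -> op T1) (B : op T2) :
  tensor (opsum n f) B = opsum n (fun j => tensor (f j) B).
Proof.
apply: functional_extensionality => i; apply: functional_extensionality => k.
by rewrite /tensor /opsum mulr_suml.
Qed.
Lemma tensor_sumr n (A : op T1) (f : nat -> op T2) :
  tensor A (opsum n f) = opsum n (fun j => tensor A (f j)).
Proof.
apply: functional_extensionality => i; apply: functional_extensionality => k.
by rewrite /tensor /opsum mulr_sumr.
Qed.

End Tens.

Section Tele.
Variable T : finType.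
Variables (W : op T) (p : pred T).
Let W' := mulop W (dg (predC p)).
Let Wp := mulop W (dg p).

Lemma apply_vsumI (I : finType) (A : op T) (f : I -> vec T) :
  apply A (fun i => \sum_k f k i) = fun i => \sum_k apply A (f k) i.
Proof.
apply: functional_extensionality => i; rewrite /apply exchange_big.
by apply: eq_bigr => j _; rewrite mulr_sumr.
Qed.

Lemma split_W x : apply W x = vadd (apply Wp x) (apply W' x).
Proof. by rewrite /Wp /W' !apply_mulop -apply_vadd dg_compl. Qed.

Lemma telescope n v : apply (opexp W n) v =
  vadd (apply (opexp W' n) v)
   (fun i => \sum_(j < n) apply (opexp W' (n.-1 - j)) (apply Wp (apply (opexp W j) v)) i).
Proof.
elim: n v => [|n IH] v.
  rewrite /= apply_id; apply: functional_extensionality => i.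
  by rewrite /vadd big_ord0 addr0.
rewrite opexpS apply_mulop split_W.
have -> : apply W' (apply (opexp W n) v) = vadd (apply W' (apply (opexp W' n) v))
   (fun i => \sum_(j < n) apply (opexp W' (n - j)) (apply Wp (apply (opexp W j) v)) i).
  rewrite IH apply_vadd (apply_vsumI _ (fun j : 'I_n => apply (opexp W' (n.-1 - j)) (apply Wp (apply (opexp W j) v)))); congr vadd.
  apply: functional_extensionality => i; apply: eq_bigr => j _.
  have -> : (n - j)%N = (n.-1 - j).+1 by have := ltn_ord j; lia.
  by rewrite opexpS apply_mulop.
apply: functional_extensionality => i.
rewrite /vadd big_ord_recr /= subnn /= apply_id. rewrite apply_mulop.
ring.
Qed.

Lemma op_ext (A B : op T) : (forall v, apply A v = apply B v) -> A = B.
Proof.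
move=> h; apply: functional_extensionality => i; apply: functional_extensionality => k.
have := congr1 (fun f => f i) (h (fun j => (j == k)%:R)).
rewrite /apply; under eq_bigr => j _ do rewrite mulrC.
rewrite sum_delta; under eq_bigr => j _ do rewrite mulrC.
by rewrite sum_delta.
Qed.

Lemma telescope_op n : opexp W n =
  opadd (opexp W' n)
   (opsum n (fun j => mulop (opexp W' (n.-1 - j)) (mulop Wp (opexp W j)))).
Proof.
apply: op_ext => v; rewrite telescope apply_opadd apply_opsum; congr vadd.
apply: functional_extensionality => i; apply: eq_bigr => j _.
by rewrite !apply_mulop.
Qed.

End Tele.

Lemma sq_real_ge0 (x : algC) : x \is Num.real -> 0 <= x ^+ 2.
Proof. by rewrite realEsqr. Qed.

Lemma sqD_le (a b t : algC) : 0 < t ->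
  `|a + b| ^+ 2 <= (1 + t) * `|a| ^+ 2 + (1 + t^-1) * `|b| ^+ 2.
Proof.
move=> t0.
have h1 : `|a + b| ^+ 2 <= (`|a| + `|b|) ^+ 2.
  by rewrite ler_pXn2r // ?ler_normD // nnegrE ?addr_ge0.
apply: le_trans h1 _; rewrite -subr_ge0.
have tn0 : t != 0 by rewrite gt_eqF.
have -> : (1 + t) * `|a| ^+ 2 + (1 + t^-1) * `|b| ^+ 2 - (`|a| + `|b|) ^+ 2
   = (t * `|a| - `|b|) ^+ 2 / t by field.
apply: divr_ge0; last exact: ltW.
by apply: sq_real_ge0; rewrite rpredB ?rpredM ?normr_real ?gtr0_real.
Qed.

Lemma sq3_le (a b c : algC) :
  `|a + b - c| ^+ 2 <= 3 * (`|a| ^+ 2 + `|b| ^+ 2 + `|c| ^+ 2).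
Proof.
have h1 : `|a + b - c| ^+ 2 <= (`|a| + `|b| + `|c|) ^+ 2.
  rewrite ler_pXn2r // ?nnegrE ?addr_ge0 //.
  by rewrite (le_trans (ler_normB _ _)) // lerD2r ler_normD.
apply: le_trans h1 _; rewrite -subr_ge0.
have -> : 3 * (`|a| ^+ 2 + `|b| ^+ 2 + `|c| ^+ 2) - (`|a| + `|b| + `|c|) ^+ 2
   = (`|a| - `|b|) ^+ 2 + (`|b| - `|c|) ^+ 2 + (`|a| - `|c|) ^+ 2 by ring.
by rewrite !addr_ge0 // sq_real_ge0 // rpredB ?normr_real.
Qed.

Section VIneq.
Variable T : finType.
Implicit Types (v w x d : vec T).

Lemma norm2D_le x d t : 0 < t ->
  norm2 (vadd x d) <= (1 + t) * norm2 x + (1 + t^-1) * norm2 d.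
Proof.
move=> t0; rewrite /norm2 !mulr_sumr -big_split; apply: ler_sum => i _.
exact: sqD_le.
Qed.

Lemma norm2_3 (a b c : vec T) :
  norm2 (fun i => a i + b i - c i) <= 3 * (norm2 a + norm2 b + norm2 c).
Proof.
rewrite /norm2 -!big_split mulr_sumr; apply: ler_sum => i _.
exact: sq3_le.
Qed.

Lemma norm2_sum n (f : 'I_n -> vec T) :
  norm2 (fun i => \sum_(k < n) f k i) <= n%:R * \sum_(k < n) norm2 (f k).
Proof.
elim: n f => [|n IH] f.
  by rewrite big_ord0 mul0r /norm2 big1 // => i _; rewrite big_ord0 normr0 expr0n.
have -> : (fun i => \sum_(k < n.+1) f k i) =
   vadd (fun i => \sum_(k < n) f (widen_ord (leqnSn n) k) i) (f ord_max).
  by apply: functional_extensionality => i; rewrite big_ord_recr.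
rewrite big_ord_recr /=.
case: n IH f => [|n] IH f.
  rewrite big_ord0 add0r mul1r; rewrite le_eqVlt; apply/orP; left; apply/eqP; rewrite /norm2; apply: eq_bigr => i _.
  by rewrite /vadd big_ord0 add0r.
have t0 : (0 : algC) < n.+1%:R^-1 by rewrite invr_gt0 ltr0n.
apply: le_trans (norm2D_le _ _ t0) _; rewrite invrK.
have := IH (fun k => f (widen_ord (leqnSn n.+1) k)).
move/(ler_wpM2l (_ : 0 <= 1 + n.+1%:R^-1)) => h.
apply: le_trans (lerD (h _) (lexx _)) _.
  by rewrite addr_ge0 // invr_ge0 ler0n.
rewrite mulrA.
have -> : (1 + n.+1%:R^-1) * n.+1%:R = (n.+2%:R : algC).
  by rewrite mulrDl mul1r mulVf ?pnatr_eq0 // natr1.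
have -> : (1 + n.+1%:R : algC) = n.+2%:R by rewrite nat1r.
by rewrite mulrDr.
Qed.

End VIneq.

Lemma mulopA (T : finType) (A B C : op T) : mulop A (mulop B C) = mulop (mulop A B) C.
Proof. apply: op_ext => v; by rewrite !apply_mulop. Qed.

Section Key.
Variables T1 T2 : finType.
Variables (WB : op T1) (WC : op T2) (p1 : pred T1) (p2 : pred T2).
Variables (PiB : op T1) (PiC : op T2) (psi : vec (T1 * T2)%type) (qB qC : nat).
Hypotheses (iB : isom WB) (iC : isom WC) (prB : projector PiB) (prC : projector PiC).

Let WB' := mulop WB (dg (predC p1)).
Let WC' := mulop WC (dg (predC p2)).
Let X := opexp WB' qB.
Let Y := opexp WC' qC.

Lemma key_bound t : 0 < t ->
  norm2 (apply (tensor PiB PiC) (apply (tensor (opexp WB qB) (opexp WC qC)) psi))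
  <= (1 + t) * (3 * (norm2 (apply (tensor (@idop T1) (mulop PiC Y)) psi)
                  + 2 * norm2 (apply (tensor (mulop PiB X) (@idop T2)) psi)))
   + (1 + t^-1) * (qB%:R * qC%:R * \sum_(j < qB) \sum_(l < qC)
        norm2 (apply (tensor (dg p1) (dg p2)) (apply (tensor (opexp WB j) (opexp WC l)) psi))).
Proof.
move=> t0.
have cX : contr X by apply: contr_opexp; apply: contr_mulop; [exact: isom_contr|exact: contr_dg].
have cY : contr Y by apply: contr_opexp; apply: contr_mulop; [exact: isom_contr|exact: contr_dg].
have iA : isom (opexp WB qB) by exact: isom_opexp.
have iCq : isom (opexp WC qC) by exact: isom_opexp.
set A := opexp WB qB. set C := opexp WC qC.
pose D := opsum qB (fun j => mulop (opexp WB' (qB.-1 - j)) (mulop (mulop WB (dg p1)) (opexp WB j))).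
pose E := opsum qC (fun j => mulop (opexp WC' (qC.-1 - j)) (mulop (mulop WC (dg p2)) (opexp WC j))).
have eA : A = opadd X D by rewrite /A (telescope_op _ p1).
have eC : C = opadd Y E by rewrite /C (telescope_op _ p2).
pose phi1 := apply (tensor A Y) psi.
pose phi2 := apply (tensor X C) psi.
pose phi0 := apply (tensor X Y) psi.
pose phiDE := apply (tensor D E) psi.
have decomp : apply (tensor A C) psi = vadd (vsub (vadd phi1 phi2) phi0) phiDE.
  rewrite /phi1 /phi2 /phi0 /phiDE eA eC !tensor_addl !tensor_addr !apply_opadd.
  apply: functional_extensionality => i; rewrite /vadd /vsub; ring.
rewrite decomp apply_vadd.
apply: le_trans (norm2D_le _ _ t0) _.
apply: lerD.
  apply: ler_wpM2l; first by rewrite addr_ge0 // ltW.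
  rewrite apply_vsub apply_vadd.
  apply: le_trans (norm2_3 _ _ _) _.
  apply: ler_wpM2l => //.
  rewrite -addrA mulr2n mulrDl mul1r; apply: lerD; last apply: lerD.
  - rewrite tensor_split apply_mulop.
    apply: le_trans (contr_tl (T2:=T2) (proj_contr prB) _) _.
    rewrite /phi1 -apply_mulop tensor_mul mulop_idl tensor_split apply_mulop isom_tl //.
  - rewrite tensor_split' apply_mulop.
    apply: le_trans (contr_tr (T1:=T1) (proj_contr prC) _) _.
    rewrite /phi2 -apply_mulop tensor_mul mulop_idl tensor_split' apply_mulop isom_tr //.
  - rewrite tensor_split' apply_mulop.
    apply: le_trans (contr_tr (T1:=T1) (proj_contr prC) _) _.
    rewrite /phi0 -apply_mulop tensor_mul mulop_idl tensor_split' apply_mulop.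
    exact: contr_tr.
apply: ler_wpM2l; first by rewrite addr_ge0 // invr_ge0 ltW.
apply: le_trans (contr_tensor (proj_contr prB) (proj_contr prC) _) _.
have hDE : phiDE = fun i => \sum_(j < qB) \sum_(l < qC)
    apply (tensor (mulop (opexp WB' (qB.-1 - j)) (mulop (mulop WB (dg p1)) (opexp WB j)))
                  (mulop (opexp WC' (qC.-1 - l)) (mulop (mulop WC (dg p2)) (opexp WC l)))) psi i.
  rewrite /phiDE /D /E tensor_suml apply_opsum; apply: functional_extensionality => i.
  by apply: eq_bigr => j _; rewrite tensor_sumr apply_opsum.
rewrite hDE.
apply: le_trans (norm2_sum (fun j : 'I_qB => fun i => \sum_(l < qC)
    apply (tensor (mulop (opexp WB' (qB.-1 - j)) (mulop (mulop WB (dg p1)) (opexp WB j)))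
                  (mulop (opexp WC' (qC.-1 - l)) (mulop (mulop WC (dg p2)) (opexp WC l)))) psi i)) _.
rewrite -mulrA; apply: ler_wpM2l; first exact: ler0n.
rewrite mulr_sumr; apply: ler_sum => j _.
apply: le_trans (norm2_sum _) _.
apply: ler_wpM2l; first exact: ler0n.
apply: ler_sum => l _.
rewrite -!(mulopA WB) -!(mulopA WC) !(mulopA (opexp _ _)) -tensor_mul -tensor_mul.
rewrite !apply_mulop.
have cK : contr (opexp WB' (qB.-1 - j)) by apply: contr_opexp; apply: contr_mulop; [exact: isom_contr|exact: contr_dg].
have cL : contr (opexp WC' (qC.-1 - l)) by apply: contr_opexp; apply: contr_mulop; [exact: isom_contr|exact: contr_dg].
apply: le_trans (contr_tensor cK cL _) _.
apply: le_trans (contr_tensor (isom_contr iB) (isom_contr iC) _) _.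
by rewrite -tensor_mul apply_mulop.
Qed.
End Key.

Section Max.
Variable I : eqType.
Variable f : I -> algC.
Hypothesis f0 : forall i, 0 <= f i.

Lemma bigmaxC_nonneg (r : seq I) : 0 <= \big[Order.max/0]_(j <- r) f j.
Proof.
elim: r => [|a r IH]; first by rewrite big_nil.
rewrite big_cons comparable_le_max ?f0 //.
by apply: real_comparable; apply: ger0_real.
Qed.

Lemma bigmaxC_ge (r : seq I) i : i \in r -> f i <= \big[Order.max/0]_(j <- r) f j.
Proof.
elim: r => [|a r IH] //; rewrite inE big_cons => /orP [/eqP ->|h].
  rewrite comparable_le_max ?lexx //.
  by apply: real_comparable; apply: ger0_real; [apply: f0|apply: bigmaxC_nonneg].
rewrite comparable_le_max ?IH ?orbT //.
by apply: real_comparable; apply: ger0_real; [apply: f0|apply: bigmaxC_nonneg].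
Qed.

Lemma bigmaxC_le (r : seq I) c : 0 <= c -> (forall i, f i <= c) ->
  \big[Order.max/0]_(j <- r) f j <= c.
Proof.
move=> c0 h; elim: r => [|a r IH]; first by rewrite big_nil.
rewrite big_cons comparable_ge_max ?h ?IH //.
by apply: real_comparable; apply: ger0_real; [apply: f0|apply: bigmaxC_nonneg].
Qed.
End Max.

Section Exp.
Variable T : finType.
Variable mu : T -> algC.
Hypothesis mu0 : forall t, 0 <= mu t.

Lemma E_le (h1 h2 : T -> algC) : (forall t, h1 t <= h2 t) -> expect mu h1 <= expect mu h2.
Proof. move=> h; apply: ler_sum => t _; exact: ler_wpM2l. Qed.

Lemma E_lin a b (h1 h2 : T -> algC) :
  expect mu (fun t => a * h1 t + b * h2 t) = a * expect mu h1 + b * expect mu h2.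
Proof.
rewrite /expect !mulr_sumr -big_split; apply: eq_bigr => t _ /=; ring.
Qed.

Lemma E_scal a (h : T -> algC) : expect mu (fun t => a * h t) = a * expect mu h.
Proof. rewrite /expect mulr_sumr; apply: eq_bigr => t _ /=; ring. Qed.

Lemma E_sum n (h : 'I_n -> T -> algC) :
  expect mu (fun t => \sum_(j < n) h j t) = \sum_(j < n) expect mu (h j).
Proof.
rewrite /expect exchange_big; apply: eq_bigr => t _ /=; by rewrite mulr_sumr.
Qed.

Lemma E_ge0 (h : T -> algC) : (forall t, 0 <= h t) -> 0 <= expect mu h.
Proof. move=> h0; apply: sumr_ge0 => t _; exact: mulr_ge0. Qed.

Lemma E_const_le (h : T -> algC) c : \sum_t mu t = 1 -> (forall t, h t <= c) ->
  expect mu h <= c.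
Proof.
move=> s1 hc; apply: le_trans (E_le (h2 := fun _ => c) hc) _.
by rewrite /expect -mulr_suml s1 mul1r.
Qed.
End Exp.

Lemma fiber_le (Z R : finType) (mu : Z -> algC) (g : Z -> R) (f : R -> algC) :
  (forall z, 0 <= mu z) -> (forall w, 0 <= f w) ->
  expect mu (fun z => f (g z)) <=
    (\big[Order.max/0]_(w : R) \sum_(z | g z == w) mu z) * \sum_w f w.
Proof.
move=> mu0 f0; rewrite /expect (partition_big g xpredT) //= mulr_sumr.
apply: ler_sum => w _.
have -> : \sum_(i | true && (g i == w)) mu i * f (g i) = (\sum_(z | g z == w) mu z) * f w.
  by rewrite mulr_suml; apply: eq_bigr => z /eqP ->.
apply: ler_wpM2r => //.
apply: (bigmaxC_ge (f := fun w => \sum_(z | g z == w) mu z)).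
  by move=> x; apply: sumr_ge0.
exact: mem_index_enum.
Qed.

Lemma limit_le (L B : algC) : L \is Num.real -> 0 <= B ->
  (forall t, 0 < t -> L <= (1 + t) * B) -> L <= B.
Proof.
move=> Lr B0 h; have Br := ger0_real B0.
case: (real_leP Lr Br) => // BL.
have B1 : 0 < B + 1 by rewrite ltr_wpDl.
have t0 : 0 < (L - B) / (B + 1) by rewrite divr_gt0 // subr_gt0.
have := h _ t0; rewrite -subr_ge0.
have -> : (1 + (L - B) / (B + 1)) * B - L = - ((L - B) / (B + 1)).
  by field; rewrite gt_eqF.
by rewrite oppr_ge0 => hle; have := lt_le_trans t0 hle; rewrite ltxx.
Qed.

Lemma final_scalar (L B M c : algC) : L \is Num.real -> 0 <= B -> B <= 9%:R ->
  0 <= M -> M <= 1 -> 0 <= c ->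
  (forall t, 0 < t -> L <= (1 + t) * B + (1 + t^-1) * (c * M)) ->
  L <= B + (9%:R + 2%:R * c) * sqrtC M.
Proof.
move=> Lr B0 B9 M0 M1 c0 h.
have [Me|Mn0] := eqVneq M 0.
  rewrite Me sqrtC0 mulr0 addr0; apply: limit_le => // t t0.
  by have := h t t0; rewrite Me !mulr0 addr0.
set s := sqrtC M.
have s0 : 0 < s by rewrite lt_def sqrtC_eq0 Mn0 sqrtC_ge0.
have s1 : s <= 1 by rewrite /s -sqrtC1 ler_sqrtC // nnegrE.
have Ms : M = s * s by rewrite -expr2 sqrtCK.
apply: le_trans (h s s0) _.
rewrite Ms.
have -> : (1 + s) * B + (1 + s^-1) * (c * (s * s)) = B + (s * B + c * s * s + c * s).
  by field; rewrite gt_eqF.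
apply: lerD => //.
have -> : (9%:R + 2%:R * c) * s = 9%:R * s + c * s + c * s by ring.
apply: lerD; last exact: lexx.
apply: lerD.
  by rewrite mulrC ler_wpM2r // ltW.
by rewrite -[X in _ <= X]mulr1 ler_wpM2l // mulr_ge0 // ltW.
Qed.

Lemma oracle_reprog (X : finType) (m : nat) (W : finType) (F : X -> bits m) (r : nat)
  (v : r.-tuple X) (z : r.-tuple (bits m)) :
  mulop (oracle W (reprog F v z)) (dg (predC (fun i : sys X m W => i.1.1 \in v)))
  = mulop (oracle W F) (dg (predC (fun i : sys X m W => i.1.1 \in v))).
Proof.
apply: functional_extensionality => i; apply: functional_extensionality => k.
rewrite /mulop; apply: eq_bigr => j _; rewrite /dg /=.
case hj: (j.1.1 \in v); first by rewrite andbF !mulr0.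
by rewrite /oracle /reprog hj.
Qed.

Lemma avg_le1 n (x : 'I_n -> algC) : (0 < n)%N -> (forall l, x l <= 1) ->
  n%:R^-1 * \sum_(l < n) x l <= 1.
Proof.
move=> n0 h; have nC : (0 : algC) < n%:R by rewrite ltr0n.
rewrite ler_pdivrMl // mulr1.
apply: le_trans (ler_sum _ (fun l _ => h l)) _.
by rewrite sumr_const card_ord.
Qed.

Lemma avg_ge0 n (x : 'I_n -> algC) : (forall l, 0 <= x l) ->
  0 <= n%:R^-1 * \sum_(l < n) x l.
Proof. move=> h; apply: mulr_ge0; [by rewrite invr_ge0 ler0n|exact: sumr_ge0]. Qed.

Lemma fiber_sum_le1 (Z R : finType) (mu : Z -> algC) (g : Z -> R) w :
  (forall z, 0 <= mu z) -> \sum_z mu z = 1 -> \sum_(z | g z == w) mu z <= 1.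
Proof.
move=> mu0 s1; rewrite -s1 big_mkcond /=; apply: ler_sum => z _.
by case: (g z == w).
Qed.

Section Sums.
Variables T1 T2 : finType.
Lemma sum_tr (R : finType) (Pi : R -> op T2) (u : vec (T1 * T2)%type) :
  orth_proj_family Pi -> \sum_w norm2 (apply (tensor (@idop T1) (Pi w)) u) <= norm2 u.
Proof.
move=> h; under eq_bigr => w _ do rewrite norm2_tr.
rewrite exchange_big norm2_pair'; apply: ler_sum => i1 _; exact: orth_sum.
Qed.
Lemma sum_tl (R : finType) (Pi : R -> op T1) (u : vec (T1 * T2)%type) :
  orth_proj_family Pi -> \sum_w norm2 (apply (tensor (Pi w) (@idop T2)) u) <= norm2 u.
Proof.
move=> h; under eq_bigr => w _ do rewrite norm2_tl.
rewrite exchange_big norm2_pair; apply: ler_sum => i1 _; exact: orth_sum.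
Qed.
End Sums.

Unset Implicit Arguments.

Definition rpr : {pred algC} := fun x => x \is Num.real.
Fact rpr_closed : semiring_closed rpr.
Proof. split; [split; [exact: rpred0 | exact: rpredD] | split; [exact: rpred1|exact: rpredM]]. Qed.
HB.instance Definition _ := GRing.isSemiringClosed.Build algC rpr rpr_closed.
Definition pp : {mpoly algC[2]} := 9%:R + 2%:R * ('X_0 * 'X_1) ^+ 2.
Lemma pp_real : pp \is a mpolyOver 2 Num.real.
Proof.
change (pp \is a mpolyOver 2 rpr).
by rewrite /pp rpredD ?rpredM ?rpred_nat ?rpredX ?mpolyOverX.
Qed.
Lemma pp_eval (a b : algC) : pp.@[fun i : 'I_2 => if i == 0 then a else b] = 9%:R + 2%:R * (a * b)^+2.
Proof. rewrite /pp !expr2 !mevalD !mevalM !mevalXU !rmorph_nat /= !meval1. by []. Qed.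

Lemma tensor_idmul (T1 T2 : finType) (A B : op T2) :
  tensor (@idop T1) (mulop A B) = mulop (tensor (@idop T1) A) (tensor (@idop T1) B).
Proof. by rewrite tensor_mul mulop_idl. Qed.
Lemma tensor_mulid (T1 T2 : finType) (A B : op T1) :
  tensor (mulop A B) (@idop T2) = mulop (tensor A (@idop T2)) (tensor B (@idop T2)).
Proof. by rewrite tensor_mul mulop_idl. Qed.

Lemma E2_bound (T1 T2 : finType) (mu1 : T1 -> algC) (mu2 : T2 -> algC)
  (h h1 h2 : T1 -> T2 -> algC) a b A1 A2 :
  (forall x, 0 <= mu1 x) -> (forall x, 0 <= mu2 x) -> 0 <= a -> 0 <= b ->
  (forall x y, h x y <= a * h1 x y + b * h2 x y) ->
  expect mu1 (fun x => expect mu2 (h1 x)) <= A1 ->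
  expect mu1 (fun x => expect mu2 (h2 x)) <= A2 ->
  expect mu1 (fun x => expect mu2 (h x)) <= a * A1 + b * A2.
Proof.
move=> m1 m2 a0 b0 hh e1 e2.
apply: le_trans (E_le m1 (h1 := fun x => expect mu2 (h x))
   (h2 := fun x => a * expect mu2 (h1 x) + b * expect mu2 (h2 x)) _) _.
  move=> x; rewrite -E_lin; exact: E_le.
rewrite E_lin; apply: lerD; exact: ler_wpM2l.
Qed.

Lemma EE_sum2 (T1 T2 : finType) (mu1 : T1 -> algC) (mu2 : T2 -> algC) K n1 n2
  (H : T1 -> T2 -> nat -> nat -> algC) :
  expect mu1 (fun x => expect mu2 (fun y => K * \sum_(j < n1) \sum_(l < n2) H x y j l))
  = K * \sum_(j < n1) \sum_(l < n2) expect mu1 (fun x => expect mu2 (fun y => H x y j l)).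
Proof.
transitivity (expect mu1 (fun x => K * \sum_(j < n1) \sum_(l < n2) expect mu2 (fun y => H x y j l))).
  rewrite /expect; apply: eq_bigr => x _; congr (_ * _).
  rewrite -/(expect _ _) E_scal E_sum; congr (_ * _); apply: eq_bigr => j _.
  by rewrite E_sum.
rewrite E_scal E_sum; congr (_ * _); apply: eq_bigr => j _; by rewrite E_sum.
Qed.

Theorem mainTheorem8 :
  exists p : {mpoly algC[2]}, p \is a mpolyOver 2 Num.real /\
  forall (X : finType) (m : nat) (R : finType) (r : nat)
    (muF : {ffun X -> bits m} -> algC)
    (Zset : {set r.-tuple (bits m)}) (muZ : r.-tuple (bits m) -> algC)
    (g : r.-tuple (bits m) -> R) (v : r.-tuple X)
    (WB WC : finType)
    (UB : op (sys X m WB)) (UC : op (sys X m WC))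
    (psi : vec (sys X m WB * sys X m WC)%type)
    (qB qC : nat)
    (PiB : R -> op (sys X m WB)) (PiC : R -> op (sys X m WC)),
    distr muF ->
    distr muZ -> (forall z, z \notin Zset -> muZ z = 0) ->
    {in Zset &, injective g} ->
    uniq v ->
    unitary UB -> unitary UC ->
    norm2 psi = 1 ->
    (0 < qB)%N -> (0 < qC)%N ->
    orth_proj_family PiB -> orth_proj_family PiC ->
    let Fvz (F : {ffun X -> bits m}) z := reprog F v z in
    let run (F : {ffun X -> bits m}) (z : r.-tuple (bits m)) (k l : nat) :=
      tensor (opexp (mulop UB (oracle WB (Fvz F z))) k)
             (opexp (mulop UC (oracle WC (Fvz F z))) l) in
    let pmax := \big[Order.max/0]_(w : R) \sum_(z | g z == w) muZ z in
    let M :=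
      (qB%:R)^-1 * \sum_(k < qB) ((qC%:R)^-1 * \sum_(l < qC)
        expect muF (fun F => expect muZ (fun z =>
          norm2 (apply (tensor (Pv WB v) (Pv WC v)) (apply (run F z k l) psi))))) in
    expect muF (fun F => expect muZ (fun z =>
      norm2 (apply (tensor (PiB (g z)) (PiC (g z))) (apply (run F z qB qC) psi))))
    <= 9 * pmax + p.@[fun i : 'I_2 => if i == 0 then qB%:R else qC%:R] * sqrtC M.
Proof.
exists pp; split; first exact: pp_real.
move=> X m R r muF Zset muZ g v WB WC UB UC psi qB qC PiB PiC.
move=> [mF0 mF1] [mZ0 mZ1] _ _ _ uB uC npsi qB0 qC0 oB oC.
cbv zeta beta.
set pmax := \big[Num.max/0]_w _.
set M := (qB%:R^-1 * _).
rewrite pp_eval.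
pose pv1 := fun i : sys X m WB => i.1.1 \in v.
pose pv2 := fun i : sys X m WC => i.1.1 \in v.
pose run (F : {ffun X -> bits m}) (z : r.-tuple (bits m)) (k l : nat) :=
      tensor (opexp (mulop UB (oracle WB (reprog F v z))) k)
             (opexp (mulop UC (oracle WC (reprog F v z))) l).
pose XF (F : {ffun X -> bits m}) := opexp (mulop (mulop UB (oracle WB F)) (dg (predC pv1))) qB.
pose YF (F : {ffun X -> bits m}) := opexp (mulop (mulop UC (oracle WC F)) (dg (predC pv2))) qC.
pose fF F w := norm2 (apply (tensor (@idop _) (mulop (PiC w) (YF F))) psi).
pose hF F w := norm2 (apply (tensor (mulop (PiB w) (XF F)) (@idop _)) psi).
pose mm F z (j l : nat) := norm2 (apply (tensor (Pv WB v) (Pv WC v)) (apply (run F z j l) psi)).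
have iWB : forall F z, isom (mulop UB (oracle WB (reprog F v z))).
  by move=> F z; apply: isom_mulop; [exact: isom_unitary|exact: oracle_isom].
have iWC : forall F z, isom (mulop UC (oracle WC (reprog F v z))).
  by move=> F z; apply: isom_mulop; [exact: isom_unitary|exact: oracle_isom].
have pointwise : forall t, 0 < t -> forall F z,
  norm2 (apply (tensor (PiB (g z)) (PiC (g z))) (apply (run F z qB qC) psi)) <=
  (1 + t) * (3 * (fF F (g z) + 2 * hF F (g z))) +
  (1 + t^-1) * (qB%:R * qC%:R * \sum_(j < qB) \sum_(l < qC) mm F z j l).
  move=> t t0 F z.
  have := key_bound pv1 pv2 psi qB qC (iWB F z) (iWC F z) (oB.1 (g z)) (oC.1 (g z)) t0.
  rewrite -!mulopA !oracle_reprog !mulopA.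
  by [].
have cY : forall F, contr (YF F).
  move=> F; apply: contr_opexp; apply: contr_mulop; last exact: contr_dg.
  by apply: isom_contr; apply: isom_mulop; [exact: isom_unitary|exact: oracle_isom].
have cX : forall F, contr (XF F).
  move=> F; apply: contr_opexp; apply: contr_mulop; last exact: contr_dg.
  by apply: isom_contr; apply: isom_mulop; [exact: isom_unitary|exact: oracle_isom].
have sf : forall F, \sum_w fF F w <= 1.
  move=> F; rewrite -npsi /fF.
  under eq_bigr => w _ do rewrite tensor_idmul apply_mulop.
  apply: le_trans (sum_tr _ oC) _; exact: contr_tr.
have sh : forall F, \sum_w hF F w <= 1.
  move=> F; rewrite -npsi /hF.
  under eq_bigr => w _ do rewrite tensor_mulid apply_mulop.
  apply: le_trans (sum_tl _ oB) _; exact: contr_tl.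
have fF0 : forall F w, 0 <= fF F w by move=> F w; exact: norm2_ge0.
have hF0 : forall F w, 0 <= hF F w by move=> F w; exact: norm2_ge0.
have mm0 : forall F z j l, 0 <= mm F z j l by move=> *; exact: norm2_ge0.
have mm1 : forall F z j l, mm F z j l <= 1.
  move=> F z j l; rewrite -npsi /mm.
  apply: le_trans (contr_tensor (contr_dg pv1) (contr_dg pv2) _) _.
  rewrite /run tensor_split apply_mulop isom_tl ?isom_tr //; exact: isom_opexp.
have fib0 : forall w, 0 <= \sum_(z | g z == w) muZ z by move=> w; exact: sumr_ge0.
have pmax0 : 0 <= pmax by apply: (bigmaxC_nonneg (f := fun w => \sum_(z | g z == w) muZ z)).
have pmax1 : pmax <= 1.
  apply: (bigmaxC_le (f := fun w => \sum_(z | g z == w) muZ z)) => //.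
  by move=> w; apply: fiber_sum_le1.
have EEmm0 : forall j l, 0 <= expect muF (fun F => expect muZ (fun z => mm F z j l)).
  by move=> j l; apply: E_ge0 => // F; apply: E_ge0.
have EEmm1 : forall j l, expect muF (fun F => expect muZ (fun z => mm F z j l)) <= 1.
  by move=> j l; apply: E_const_le => // F; apply: E_const_le.
have KM : qB%:R * qC%:R * M =
    \sum_(j < qB) \sum_(l < qC) expect muF (fun F => expect muZ (fun z => mm F z j l)).
  have e : forall S : algC, qB%:R * qC%:R * (qB%:R^-1 * S) = qC%:R * S.
    by move=> S; field; rewrite pnatr_eq0 -lt0n.
  rewrite /M e mulr_sumr; apply: eq_bigr => k _.
  rewrite mulrA mulfV ?pnatr_eq0 -?lt0n // mul1r.
  by apply: eq_bigr => l _.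
have M0 : 0 <= M.
  by apply: avg_ge0 => k; apply: avg_ge0 => l; apply: EEmm0.
have M1 : M <= 1.
  by apply: avg_le1 => // k; apply: avg_le1 => // l; apply: EEmm1.
apply: final_scalar.
- apply: ger0_real; apply: E_ge0 => // F; apply: E_ge0 => // z; exact: norm2_ge0.
- by apply: mulr_ge0.
- by rewrite -[X in _ <= X]mulr1 ler_wpM2l.
- exact: M0.
- exact: M1.
- by rewrite exprn_ge0 // mulr_ge0.
move=> t t0.
apply: (@E2_bound _ _ muF muZ _ (fun F z => 3 * (fF F (g z) + 2 * hF F (g z)))
   (fun F z => qB%:R * qC%:R * \sum_(j < qB) \sum_(l < qC) mm F z j l)) => //.
- by rewrite addr_ge0 // ltW.
- by rewrite addr_ge0 // invr_ge0 ltW.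
- move=> F z; exact: (pointwise t t0 F z).
- apply: E_const_le => // F.
  apply: le_trans (fiber_le g (f := fun w => 3 * (fF F w + 2 * hF F w)) mZ0 _) _.
    by move=> w; rewrite mulr_ge0 // addr_ge0 // mulr_ge0.
  rewrite mulrC ler_wpM2r //.
  rewrite -mulr_sumr big_split /= -mulr_sumr.
  have -> : (9 : algC) = 3 * (1 + 2 * 1) by ring.
  by rewrite ler_wpM2l // lerD // ler_wpM2l.
rewrite EE_sum2 -KM expr2.
by rewrite le_eqVlt; apply/orP; left; apply/eqP; ring.
Qed.
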